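(* Let $A$ be a VPA. The functions $t_f:\mathrm{AllFlat}\to\mathrm{rConf}$ and $\nu_f=\mathsf{rep}\circ t_f:\mathrm{AllFlat}\to\mathrm{Rep}$ are rational.
   Context: VPA $A=(Q,\Sigma,\Gamma,\bot,q_0,\delta,F)$ over a pushdown alphabet $\Sigma=\Sigma_c\cup\Sigma_r\cup\Sigma_{\mathit{int}}$ with $\delta_c:Q\times\Sigma_c\to(\Gamma\setminus\{\bot\})\times Q$, $\delta_r:Q\times\Sigma_r\times\Gamma\to Q$, $\delta_{\mathit{int}}:Q\times\Sigma_{\mathit{int}}\to Q$; configurations $\alpha q$ with $\alpha\in\bot(\Gamma\setminus\{\bot\})^*$; a call letter $a$ with $\delta(p,a)=(\gamma,q)$ maps $\alpha p$ to $\alpha\gamma q$; internal letters change only the state; return letters pop the top $\gamma\ne\bot$ (new state $\delta(p,a,\gamma)$) or read $\bot$ without popping. $\delta(c,w)$: configuration reached from $c$ on $w$; $\mathcal L(c)$: words leading to a state in $F$. $\mathrm{rConf}$: configurations reachable from $\bot q_0$. $\mathsf{rep}(c)$: length-lexicographically least (for fixed linear orders on $\Gamma$ and $Q$) $c'\in\mathrm{rConf}$ with $\mathcal L(c')=\mathcal L(c)$; $\mathrm{Rep}=\mathsf{rep}(\mathrm{rConf})$. $\Sigma_f=\Sigma_c\cup Q\cup Q^Q$ (disjoint union); $\mathrm{AllFlat}=Q^*(\Sigma_c\cup Q^QQ^* )^*$, each element factors uniquely as $s_0s_1\cdots s_m$ with $s_0\in Q^*$, $s_i\in\Sigma_c\cup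 Q^QQ^*$. $t_f(\varepsilon)=\bot q_0$; $t_f(q_1\cdots q_n)=\bot q_1$ for $n\ge1$; if $s_m\in\Sigma_c$ then $t_f(s_0\cdots s_m)=\delta(t_f(s_0\cdots s_{m-1}),s_m)$; if $s_m=\tau q_2\cdots q_k\in Q^QQ^*$ and $t_f(s_0\cdots s_{m-1})=\alpha q$ then $t_f(s_0\cdots s_m)=\alpha\tau(q)$. A partial function between free monoids is rational if its graph is a rational subset of the product monoid (recognized by a finite transducer). *)

(* Defs.v *)
From mathcomp Require Import all_boot.
Set Implicit Arguments. Unset Strict Implicit. Unset Printing Implicit Defensive.

Section Rational.
Variables A B : Type.
Definition mpair := (seq A * seq B)%type.

Definition rcat (p q : mpair) : mpair := (p.1 ++ q.1, p.2 ++ q.2).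

Inductive rstar (S : mpair -> Prop) : mpair -> Prop :=
| rstar_nil : rstar S ([::], [::])
| rstar_cons p q : S p -> rstar S q -> rstar S (rcat p q).

Inductive rational : (mpair -> Prop) -> Prop :=
| rat_empty : rational (fun _ => False)
| rat_single (u : seq A) (v : seq B) : rational (fun p => p = (u, v))
| rat_union S T : rational S -> rational T -> rational (fun p => S p \/ T p)
| rat_prod S T : rational S -> rational T ->
    rational (fun p => exists p1 p2, [/\ S p1, T p2 & p = rcat p1 p2])
| rat_star S : rational S -> rational (rstar S)
| rat_ext S T : (forall p, S p <-> T p) -> rational S -> rational T.

Definition rational_fun (graph : seq A -> seq B -> Prop) :=
  rational (fun p => graph p.1 p.2).
End Rational.

Record VPA := {
  Sc : finType;
  Sr : finType;
  Si : finType;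
  Qs : finType;
  Gm : finType;
  bot : Gm;
  q0 : Qs;
  dc : Qs -> Sc -> Gm * Qs;
  dr : Qs -> Sr -> Gm -> Qs;
  di : Qs -> Si -> Qs;
  Fin : {set Qs};
  dc_nbot : forall p a, (dc p a).1 != bot
}.

Section VPADefs.
Variable A : VPA.

Definition Sigma := ((Sc A + Sr A) + Si A)%type.

(* A configuration  bot g_1 ... g_k q  is represented as ([:: g_k; ...; g_1], q):
   the stack content above bot, top first, and the state. *)
Definition conf := (seq (Gm A) * Qs A)%type.

Definition enc (c : conf) : seq (Gm A + Qs A) :=
  inl (bot A) :: map inl (rev c.1) ++ [:: inr c.2].

Definition step (c : conf) (x : Sigma) : conf :=
  match x with
  | inl (inl a) => let gq := dc c.2 a in (gq.1 :: c.1, gq.2)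
  | inl (inr a) =>
      match c.1 with
      | g :: s => (s, dr c.2 a g)
      | [::] => ([::], dr c.2 a (bot A))
      end
  | inr a => (c.1, di c.2 a)
  end.

Definition delta (c : conf) (w : seq Sigma) : conf := foldl step c w.

Definition lang (c : conf) (w : seq Sigma) : bool := (delta c w).2 \in Fin A.

Definition init_conf : conf := ([::], q0 A).

Definition rConf (c : conf) : Prop := exists w, delta init_conf w = c.

(* length-lexicographic order on words over Gamma u Q, induced by
   linear orders on Gamma and Q given by injective ranks rkG, rkQ *)
Variables (rkG : Gm A -> nat) (rkQ : Qs A -> nat).

Definition rk (x : Gm A + Qs A) : nat :=
  match x with inl g => (rkG g).*2 | inr q => (rkQ q).*2.+1 end.

Fixpoint lex_le (u v : seq nat) : bool :=
  match u, v with
  | [::], _ => true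
  | _ :: _, [::] => false
  | x :: u', y :: v' => (x < y) || ((x == y) && lex_le u' v')
  end.

Definition llex_le (u v : seq (Gm A + Qs A)) : bool :=
  (size u < size v) ||
  ((size u == size v) && lex_le (map rk u) (map rk v)).

Definition is_rep (c c' : conf) : Prop :=
  [/\ rConf c',
      (forall w, lang c' w = lang c w) &
      (forall c'', rConf c'' -> (forall w, lang c'' w = lang c w) ->
                   llex_le (enc c') (enc c''))].

Definition Sigmaf := ((Sc A + Qs A) + {ffun Qs A -> Qs A})%type.

Inductive block :=
| BCall of Sc A
| BTau of {ffun Qs A -> Qs A} & seq (Qs A).

Definition block_word (b : block) : seq Sigmaf :=
  match b with
  | BCall a => [:: inl (inl a)]
  | BTau tau qs => inr tau :: map (fun q => inl (inr q)) qs
  end.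

Definition flat_word (s0 : seq (Qs A)) (bs : seq block) : seq Sigmaf :=
  map (fun q => inl (inr q)) s0 ++ flatten (map block_word bs).

Definition AllFlat (w : seq Sigmaf) : Prop :=
  exists s0 bs, w = flat_word s0 bs.

Definition tf_block (c : conf) (b : block) : conf :=
  match b with
  | BCall a => step c (inl (inl a))
  | BTau tau _ => (c.1, tau c.2)
  end.

Definition tf_fact (s0 : seq (Qs A)) (bs : seq block) : conf :=
  foldl tf_block (match s0 with [::] => init_conf | q1 :: _ => ([::], q1) end) bs.

(* graph of t_f on AllFlat (the factorization being unique) *)
Definition tf_rel (w : seq Sigmaf) (c : conf) : Prop :=
  exists s0 bs, w = flat_word s0 bs /\ c = tf_fact s0 bs.

Definition nuf_rel (w : seq Sigmaf) (c' : conf) : Prop :=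
  exists c, tf_rel w c /\ is_rep c c'.

End VPADefs.

(* Main.v *)
Require Import Defs.
From mathcomp Require Import all_boot zify.
From Stdlib Require Import Classical ClassicalEpsilon.
Set Implicit Arguments. Unset Strict Implicit. Unset Printing Implicit Defensive.

Definition asb (P : Prop) : bool := if excluded_middle_informative P then true else false.
Lemma asbP (P : Prop) : reflect P (asb P).
Proof. rewrite /asb; case: excluded_middle_informative => h; by constructor. Qed.

Section RatLemmas.
Variables X Y : Type.
Notation mp := (mpair X Y).

Lemma rcat0p (p : mp) : rcat ([::], [::]) p = p.
Proof. by case: p. Qed.
Lemma rcatp0 (p : mp) : rcat p ([::], [::]) = p.
Proof. by case: p => a b; rewrite /rcat /= !cats0. Qed.
Lemma rcatA (p q r : mp) : rcat p (rcat q r) = rcat (rcat p q) r.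
Proof. by rewrite /rcat /= !catA. Qed.

Lemma rat_ext' (S T : mp -> Prop) : rational S -> (forall p, S p <-> T p) -> rational T.
Proof. by move=> h e; apply: rat_ext e h. Qed.

Lemma rat_and (P : Prop) (S : mp -> Prop) : rational S -> rational (fun p => P /\ S p).
Proof.
move=> hS; case: (classic P) => hP.
  by apply: (rat_ext' hS) => p; split=> [h|[]].
by apply: (rat_ext' (@rat_empty X Y)) => p; split=> [[]|[]].
Qed.

Lemma rat_exl (I : eqType) (s : seq I) (F : I -> mp -> Prop) :
  (forall i, rational (F i)) -> rational (fun p => exists i, i \in s /\ F i p).
Proof.
move=> hF; elim: s => [|i s IH].
  by apply: (rat_ext' (@rat_empty X Y)) => p; split=> [[]|[? []]].
apply: (rat_ext' (rat_union (hF i) IH)) => p; split.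
  case=> [h|[j [hj h]]]; [exists i|exists j]; by rewrite inE ?eqxx ?hj ?orbT.
case=> j []; rewrite inE => /orP [/eqP->|hj] h; [left|right; exists j] => //.
Qed.

Lemma rat_ex (I : finType) (F : I -> mp -> Prop) :
  (forall i, rational (F i)) -> rational (fun p => exists i, F i p).
Proof.
move=> hF; apply: (rat_ext' (rat_exl (enum I) hF)) => p; split.
  by case=> i [_ h]; exists i.
by case=> i h; exists i; rewrite mem_enum.
Qed.

Lemma rat_sing (u : seq X) (v : seq Y) : rational (fun p : mp => p = (u, v)).
Proof. exact: rat_single. Qed.

Lemma rat_prod' (S T : mp -> Prop) : rational S -> rational T ->
  rational (fun p => exists p1 p2, [/\ S p1, T p2 & p = rcat p1 p2]).
Proof. exact: rat_prod. Qed.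

End RatLemmas.

Section Kleene.
Variables (X Y : Type) (S : finType) (E : S -> mpair X Y -> S -> Prop).
Hypothesis HE : forall s t, rational (fun x => E s x t).
Notation mp := (mpair X Y).

Inductive kpath : S -> mp -> S -> Prop :=
| pnil s : kpath s ([::], [::]) s
| pcons s x r y t : E s x r -> kpath r y t -> kpath s (rcat x y) t.

Inductive pathX (P : {set S}) : S -> mp -> S -> Prop :=
| px1 s x t : E s x t -> pathX P s x t
| pxc s x r y t : E s x r -> r \in P -> pathX P r y t -> pathX P s (rcat x y) t.

Lemma pathX_mono (P Q : {set S}) : P \subset Q ->
  forall s x t, pathX P s x t -> pathX Q s x t.
Proof.
move=> sub s x t; elim=> {s x t} [s x t e|s x r y t e hr _ IH]; first exact: px1.
by apply: pxc e _ IH; apply: (subsetP sub).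
Qed.

Lemma pathX_cat (P : {set S}) s x r y t :
  pathX P s x r -> r \in P -> pathX P r y t -> pathX P s (rcat x y) t.
Proof.
move=> h; elim: h y t => {s x r} [s x r e|s x r1 y1 r e h1 _ IH] y t hr hy.
  exact: pxc e hr hy.
rewrite -rcatA; apply: pxc e h1 _; exact: IH.
Qed.

Lemma pathX_star (P : {set S}) r x y t : r \in P ->
  rstar (fun x => pathX P r x r) x -> pathX P r y t -> pathX P r (rcat x y) t.
Proof.
move=> hr h; elim: h y => {x} [|p q hp _ IH] y hy; first by rewrite rcat0p.
rewrite -rcatA; apply: pathX_cat hp hr _; exact: IH.
Qed.

Lemma pathX_split (P : {set S}) r s x t : r \notin P ->
  pathX (r |: P) s x t <->
  pathX P s x t \/ exists x1 x2 x3, [/\ pathX P s x1 r,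
     rstar (fun x => pathX P r x r) x2, pathX P r x3 t & x = rcat x1 (rcat x2 x3)].
Proof.
move=> nr; split.
  elim=> {s x t} [s x t e|s x r0 y t e hr0 _ IH]; first by left; apply: px1.
  rewrite in_setU1 in hr0.
  case: (eqVneq r0 r) => [er|nr0].
    subst r0; right; case: IH => [hy|[x1 [x2 [x3 [h1 h2 h3 ->]]]]].
      exists x, ([::],[::]), y; split; [exact: px1|exact: rstar_nil|exact: hy|by rewrite rcat0p].
    exists x, (rcat x1 x2), x3; split; [exact: px1|exact: rstar_cons|exact: h3|].
    by rewrite !rcatA.
  rewrite (negPf nr0) /= in hr0.
  case: IH => [hy|[x1 [x2 [x3 [h1 h2 h3 ->]]]]]; first by left; apply: pxc e hr0 hy.
  right; exists (rcat x x1) , x2, x3; split; [exact: pxc e hr0 h1|exact: h2|exact: h3|].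
  by rewrite !rcatA.
have sub : P \subset r |: P by apply/subsetP => z hz; rewrite in_setU1 hz orbT.
have rin : r \in r |: P by rewrite in_setU1 eqxx.
case=> [h|[x1 [x2 [x3 [h1 h2 h3 ->]]]]]; first exact: pathX_mono h.
apply: (pathX_cat (pathX_mono sub h1) rin).
apply: (pathX_star rin _ (pathX_mono sub h3)).
elim: h2 => [|p q hp _ IH]; first exact: rstar_nil.
exact: rstar_cons (pathX_mono sub hp) IH.
Qed.

Lemma rat_pathX n : forall (P : {set S}), #|P| = n -> forall s t,
  rational (fun x => pathX P s x t).
Proof.
elim: n => [|n IH] P hP s t.
  move/eqP: hP; rewrite cards_eq0 => /eqP ->.
  apply: (rat_ext' (HE s t)) => x; split; first exact: px1.
  by case=> // s0 x0 r y t0 _; rewrite inE.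
have [r hr] : exists r, r \in P.
  by apply/set0Pn; rewrite -card_gt0 hP.
have eP : P = r |: (P :\ r) by rewrite setD1K.
have nr : r \notin P :\ r by rewrite !inE eqxx.
have hc : #|P :\ r| = n by move: hP; rewrite (cardsD1 r P) hr add1n => -[].
have IH' := IH _ hc.
rewrite eP.
apply: (rat_ext' (rat_union (IH' s t) (rat_prod (IH' s r) (rat_prod (rat_star (IH' r r)) (IH' r t))))).
move=> x; rewrite pathX_split //; split.
  case=> [h|[x1 [x2 [h1 h2 ->]]]]; first by left.
  case: h2 => x3 [x4 [h3 h4 ->]]; right.
  by exists x1, x3, x4.
case=> [h|[x1 [x2 [x3 [h1 h2 h3 ->]]]]]; [by left|right].
exists x1, (rcat x2 x3); split=> //; by exists x2, x3.
Qed.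

Lemma rat_path s t : rational (fun x => kpath s x t).
Proof.
have hT := rat_pathX (erefl #|[set: S]|) s t.
apply: (rat_ext' (rat_union (rat_and (s = t) (@rat_sing X Y [::] [::])) hT)) => x; clear hT; split.
  case=> [[-> ->]|]; first exact: pnil.
  elim=> {s x t} [s x t e|s x r y t e _ _ IH]; first by rewrite -[x]rcatp0; apply: pcons e (pnil _).
  exact: pcons e IH.
elim=> {s x t} [s|s x r y t e _ IH]; first by left.
right; case: IH => [[<- ->]|h]; first by rewrite rcatp0; apply: px1.
by apply: pxc e _ h; rewrite inE.
Qed.
End Kleene.

Section Zipo.
Variable T : Type.
Fixpoint zipo (s t : seq T) {struct s} : seq (option T * option T) :=
  match s with
  | [::] => map (fun y => (None, Some y)) t
  | x :: s' => match t with
               | [::] => map (fun x => (Some x, None)) s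
               | y :: t' => (Some x, Some y) :: zipo s' t'
               end
  end.

Lemma zipo_rcons_l s t x : size t <= size s ->
  zipo (rcons s x) t = rcons (zipo s t) (Some x, None).
Proof.
elim: s t => [|a s IH] [|b t] //= h.
  by rewrite map_rcons.
by rewrite IH.
Qed.

Lemma zipo_rcons_r s t y : size s <= size t ->
  zipo s (rcons t y) = rcons (zipo s t) (None, Some y).
Proof.
elim: s t => [|a s IH] [|b t] //= h.
  by rewrite map_rcons.
by rewrite IH.
Qed.

Lemma zipo_rcons2 s t x y : size s = size t ->
  zipo (rcons s x) (rcons t y) = rcons (zipo s t) (Some x, Some y).
Proof.
elim: s t => [|a s IH] [|b t] //= h.
by rewrite IH //; case: h.
Qed.

Lemma zipo_cons s t : zipo s t =
  if (s, t) is ([::], [::]) then [::] else (ohead s, ohead t) :: zipo (behead s) (behead t).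
Proof.
case: s => [|a s]; case: t => [|b t] //=.
by case: s.
Qed.

Lemma map_snd_zipo s t : map snd (zipo s t) = map Some t ++ nseq (size s - size t) None.
Proof.
elim: s t => [|a s IH] [|b t] /=.
- by [].
- by rewrite -map_comp cats0.
- by rewrite -map_comp; congr (_ :: _); elim: s {IH} => //= c s ->.
- by rewrite IH.
Qed.
End Zipo.

Section GL.
Variable A : VPA.
Definition QL (q : Qs A) : Sigmaf A := inl (inr q).

Definition tfrun (q : Qs A) (bs : seq (block A)) : conf A := foldl (@tf_block A) ([::], q) bs.

Lemma tf_shift bs : forall s q, foldl (@tf_block A) (s, q) bs = ((tfrun q bs).1 ++ s, (tfrun q bs).2).
Proof.
rewrite /tfrun; elim: bs => [|[a|tau qs] bs IH] s q /=.
- by [].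
- by rewrite IH [in RHS]IH /= -catA.
- exact: IH.
Qed.

Lemma tfrun_call q a bs : tfrun q (BCall a :: bs) =
  (rcons (tfrun (dc q a).2 bs).1 (dc q a).1, (tfrun (dc q a).2 bs).2).
Proof. by rewrite {1}/tfrun /= tf_shift cats1. Qed.

Lemma tfrun_tau q tau qs bs : tfrun q (BTau tau qs :: bs) = tfrun (tau q) bs.
Proof. by []. Qed.

Lemma tfrun_nil q : tfrun q [::] = ([::], q).
Proof. by []. Qed.

Lemma rat_qtail : rational (fun x : mpair (Sigmaf A) (Gm A + Qs A) => exists qs, x = (map QL qs, [::])).
Proof.
have h1 : rational (fun x : mpair (Sigmaf A) (Gm A + Qs A) => exists q, x = ([:: QL q], [::])).
  by apply: rat_ex => q; apply: rat_sing.
apply: (rat_ext' (rat_star h1)) => x; split.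
  elim=> [|p r [q ->] _ [qs ->]]; first by exists [::].
  by exists (q :: qs).
case=> qs ->; elim: qs => [|q qs IH]; first exact: rstar_nil.
have -> : (map QL (q :: qs), [::]) = rcat ([:: QL q], [::]) (map QL qs, [::] : seq (Gm A + Qs A)) by [].
by apply: rstar_cons IH; exists q.
Qed.

Lemma rat_tautail tau : rational (fun x : mpair (Sigmaf A) (Gm A + Qs A) =>
   exists qs, x = (inr tau :: map QL qs, [::])).
Proof.
apply: (rat_ext' (rat_prod (@rat_sing (Sigmaf A) (Gm A + Qs A) [:: inr tau] [::]) rat_qtail)) => x; split.
  by case=> p1 [p2 [-> [qs ->] ->]]; exists qs.
by case=> qs ->; exists ([:: inr tau], [::]), (map QL qs, [::]); split => //; exists qs.
Qed.

Variables (S : finType) (init : Qs A -> Qs A -> S)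
  (st : S -> option (Gm A) * option (Gm A) -> S) (acc : S -> bool).

Notation NS := ((option bool * Qs A) * S)%type.
Notation MP := (mpair (Sigmaf A) (Gm A + Qs A)).

Definition Edge (s : NS) (x : MP) (t : NS) : Prop :=
 let: (ph, q, d) := s in let: (ph', q', d') := t in
 (exists tau : {ffun Qs A -> Qs A}, (q' = tau q /\ ph' = ph /\ d' = d) /\ exists qs, x = (inr tau :: map QL qs, [::]))
 \/ (exists a, (ph = Some true /\ ph' = Some true /\ q' = (dc q a).2 /\ st d' (Some (dc q a).1, None) = d) /\ x = ([:: inl (inl a)], [::]))
 \/ (exists g, (ph = Some false /\ ph' = Some false /\ q' = q /\ st d' (None, Some g) = d) /\ x = ([::], [:: inl g]))
 \/ (exists ag : Sc A * Gm A, (ph = None /\ ph' = None /\ q' = (dc q ag.1).2 /\ st d' (Some (dc q ag.1).1, Some ag.2) = d) /\ x = ([:: inl (inl ag.1)], [:: inl ag.2]))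
 \/ ((ph != None /\ ph' = None /\ q' = q /\ d' = d) /\ x = ([::],[::])).

Lemma rat_Edge s t : rational (fun x => Edge s x t).
Proof.
case: s => [[ph q] d]; case: t => [[ph' q'] d'] /=.
repeat apply: rat_union.
- by apply: rat_ex => tau; apply: rat_and; apply: rat_tautail.
- by apply: rat_ex => a; apply: rat_and; apply: rat_sing.
- by apply: rat_ex => g; apply: rat_and; apply: rat_sing.
- by apply: rat_ex => ag; apply: rat_and; apply: rat_sing.
- by apply: rat_and; apply: rat_sing.
Qed.

Definition phc (ph : option bool) (m n : nat) : bool :=
  match ph with None => m == n | Some true => n <= m | Some false => m <= n end.

Lemma PS_sound s x t : kpath Edge s x t -> forall qf dT, t = (None, qf, dT) ->
  exists bs al, [/\ x = (flatten (map (@block_word A) bs), map inl (rev al)),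
     (tfrun s.1.2 bs).2 = qf, phc s.1.1 (size (tfrun s.1.2 bs).1) (size al) &
     foldl st dT (zipo (tfrun s.1.2 bs).1 al) = s.2].
Proof.
elim=> {s x t} [s|s x r y t e _ IH] qf dT et.
  by subst s; exists [::], [::]; split => //=.
case: (IH qf dT et) => bs [al [-> hq hph hd]] {IH}.
move: e hq hph hd; case: s => [[ph q] d]; case: r => [[ph' q'] d'] /=.
case=> [[tau [[-> [-> ->]] [qs ->]]]|[[a [[-> [-> [-> hst]]] ->]]|[[g [[-> [-> [-> hst]]] ->]]|[[[a g] [[-> [-> [-> hst]]] ->]]|[[hph [-> [-> ->]]] ->]]]]] hq hph' hd.
- by exists (BTau tau qs :: bs), al; split.
- exists (BCall a :: bs), al; rewrite tfrun_call /=; split => //.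
    by rewrite size_rcons; apply: leqW.
  by rewrite zipo_rcons_l // -cats1 foldl_cat /= hd.
- exists bs, (rcons al g); rewrite rev_rcons /=; split => //.
    by rewrite size_rcons; apply: leqW.
  by rewrite zipo_rcons_r // -cats1 foldl_cat /= hd.
- exists (BCall a :: bs), (rcons al g); rewrite tfrun_call rev_rcons /=; split => //.
    by rewrite !size_rcons eqSS.
  by rewrite zipo_rcons2 ?(eqP hph') // -cats1 foldl_cat /= hd.
- exists bs, al; split => //.
  by move: hph hph'; case: ph => // -[] _ /eqP ->; rewrite /phc leqnn.
Qed.

Lemma PS_complete n : forall bs al ph q dT, size bs + size al + (ph != None) <= n ->
  phc ph (size (tfrun q bs).1) (size al) ->
  kpath Edge (ph, q, foldl st dT (zipo (tfrun q bs).1 al))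
    (flatten (map (@block_word A) bs), map inl (rev al)) (None, (tfrun q bs).2, dT).
Proof.
elim: n => [|n IH] bs al ph q dT hn hph.
  move: hn hph; case: bs => [|? ?] //; case: al => [|? ?] //; case: ph => [?|] // _ _.
  exact: pnil.
case: ph hn hph => [b|] hn hph.
  case: (eqVneq (size (tfrun q bs).1) (size al)) => [eqs|neq].
    have e : Edge (Some b, q, foldl st dT (zipo (tfrun q bs).1 al)) ([::],[::])
                  (None, q, foldl st dT (zipo (tfrun q bs).1 al)).
      by do 4 right; split.
    have p := pcons e (IH bs al None q dT _ _); rewrite rcat0p in p; apply: p.
      by move: hn; rewrite addn1 ltnS addn0.
    by rewrite /= eqs.
  case: b hph hn => /= hph hn.
    case: bs hn hph neq => [|[a|tau qs] bs] hn hph neq.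
    - by move: hph neq; rewrite /=; case: (size al).
    - move: hph neq; rewrite tfrun_call /= size_rcons => hph neq.
      have hle : size al <= size (tfrun (dc q a).2 bs).1.
        by rewrite -ltnS ltn_neqAle hph andbT eq_sym.
      have e : Edge (Some true, q, foldl st dT (zipo (rcons (tfrun (dc q a).2 bs).1 (dc q a).1) al))
                ([:: inl (inl a)], [::])
                (Some true, (dc q a).2, foldl st dT (zipo (tfrun (dc q a).2 bs).1 al)).
        right; left; exists a; split => //.
        by rewrite zipo_rcons_l // -cats1 foldl_cat.
      have p := pcons e (IH bs al (Some true) (dc q a).2 dT _ hle); apply: p.
      by move: hn; rewrite /= addSn ltnS.
    - rewrite tfrun_tau in hph neq *.
      have e : Edge (Some true, q, foldl st dT (zipo (tfrun (tau q) bs).1 al))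
                (inr tau :: map QL qs, [::])
                (Some true, tau q, foldl st dT (zipo (tfrun (tau q) bs).1 al)).
        by left; exists tau; split => //; exists qs.
      have p := pcons e (IH bs al (Some true) (tau q) dT _ hph); apply: p.
      by move: hn; rewrite /= addSn ltnS.
  case/lastP: al hph hn neq => [|al g] hph hn neq.
    by move: hph neq; rewrite leqn0 => /eqP ->.
  move: hph neq; rewrite size_rcons => hph neq.
  have hle : size (tfrun q bs).1 <= size al.
    by rewrite -ltnS ltn_neqAle hph andbT.
  have e : Edge (Some false, q, foldl st dT (zipo (tfrun q bs).1 (rcons al g)))
            ([::], [:: inl g])
            (Some false, q, foldl st dT (zipo (tfrun q bs).1 al)).
    right; right; left; exists g; split => //.
    by rewrite zipo_rcons_r // -cats1 foldl_cat.
  have p := pcons e (IH bs al (Some false) q dT _ hle); rewrite rev_rcons; apply: p.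
  by move: hn; rewrite size_rcons /=; lia.
case: bs hn hph => [|[a|tau qs] bs] hn hph.
- move: hph; rewrite /= eq_sym => /nilP ->; exact: pnil.
- move: hph; rewrite tfrun_call size_rcons /=.
  case/lastP: al hn => [|al g] hn //; rewrite size_rcons eqSS => hph.
  have e : Edge (None, q, foldl st dT (zipo (rcons (tfrun (dc q a).2 bs).1 (dc q a).1) (rcons al g)))
            ([:: inl (inl a)], [:: inl g])
            (None, (dc q a).2, foldl st dT (zipo (tfrun (dc q a).2 bs).1 al)).
    right; right; right; left; exists (a, g); split => //.
    by rewrite zipo_rcons2 ?(eqP hph) // -cats1 foldl_cat.
  have p := pcons e (IH bs al None (dc q a).2 dT _ hph); rewrite rev_rcons; apply: p.
  by move: hn; rewrite size_rcons /= addSn addnS !addn0 ltnS => /ltnW.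
- rewrite tfrun_tau in hph *.
  have e : Edge (None, q, foldl st dT (zipo (tfrun (tau q) bs).1 al))
            (inr tau :: map QL qs, [::])
            (None, tau q, foldl st dT (zipo (tfrun (tau q) bs).1 al)).
    by left; exists tau; split => //; exists qs.
  have p := pcons e (IH bs al None (tau q) dT _ hph); apply: p.
  by move: hn; rewrite /= addSn ltnS.
Qed.

Lemma tf_fact_run s0 bs : tf_fact s0 bs = tfrun (head (q0 A) s0) bs.
Proof. by case: s0. Qed.

Definition S0set (qi : Qs A) (p : MP) : Prop :=
  (qi = q0 A /\ p = ([::],[::])) \/
  exists p1 p2, [/\ p1 = ([:: QL qi],[::]), (exists qs, p2 = (map QL qs, [::])) & p = rcat p1 p2].

Lemma S0set_ok s0 : S0set (head (q0 A) s0) (map QL s0, [::]).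
Proof.
case: s0 => [|q1 s0]; [left|right] => //.
by exists ([:: QL q1], [::]), (map QL s0, [::]); split => //; exists s0.
Qed.

Definition Piece (i : Qs A * option bool * S * Qs A * Qs A) (p : MP) : Prop :=
  let: (qi, ph0, d0, qf, q') := i in
  acc d0 /\ exists p1 p2, [/\ S0set qi p1,
     (exists p3 p4, [/\ p3 = ([::],[:: inl (bot A)]),
        (exists p5 p6, [/\ kpath Edge (ph0, qi, d0) p5 (None, qf, init qf q'),
                           p6 = ([::],[:: inr q']) & p4 = rcat p5 p6]) & p2 = rcat p3 p4])
     & p = rcat p1 p2].

Lemma rat_Piece i : rational (Piece i).
Proof.
case: i => [[[[qi ph0] d0] qf] q'] /=.
apply: rat_and; apply: rat_prod; last apply: rat_prod.
- apply: rat_union; first by apply: rat_and; apply: rat_sing.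
  by apply: rat_prod; [apply: rat_sing|apply: rat_qtail].
- exact: rat_sing.
- apply: rat_prod; last exact: rat_sing.
  apply: rat_path; exact: rat_Edge.
Qed.

Theorem GL : rational_fun (fun (w : seq (Sigmaf A)) (u : seq (Gm A + Qs A)) =>
  exists c c', [/\ tf_rel w c, acc (foldl st (init c.2 c'.2) (zipo c.1 c'.1)) & u = enc c']).
Proof.
rewrite /rational_fun.
apply: (rat_ext' (rat_ex rat_Piece)) => -[w u] /=; split.
  case=> [[[[[qi ph0] d0] qf] q']] /= [hacc [p1 [p2 [h0 [p3 [p4 [-> [p5 [p6 [hp -> ->]]] ->]]] ew]]]].
  have [bs [al [e5 hqf hph hd]]] := PS_sound hp (erefl _).
  rewrite /= in hqf hph hd.
  have [s0 [e1 hs0]] : exists s0, p1 = (map QL s0, [::]) /\ head (q0 A) s0 = qi.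
    case: h0 => [[-> ->]|[x1 [x2 [-> [qs ->] ->]]]]; first by exists [::].
    by exists (qi :: qs).
  exists (tfrun qi bs), (al, q'); split.
  - exists s0, bs; split; last by rewrite tf_fact_run hs0.
    by move: ew; rewrite e1 e5 /rcat /= => -[-> _]; rewrite cats0.
  - by rewrite /= hqf hd.
  - by move: ew; rewrite e1 e5 /rcat /= => -[_ ->].
case=> c [c' [[s0 [bs [ew ec]]] hacc ->]].
set qi := head (q0 A) s0.
have ec' : c = tfrun qi bs by rewrite ec tf_fact_run.
subst c.
set stk := (tfrun qi bs).1.
exists (qi, (if size c'.1 <= size stk then Some true else Some false),
        foldl st (init (tfrun qi bs).2 c'.2) (zipo stk c'.1), (tfrun qi bs).2, c'.2) => /=.
split; first by rewrite tf_fact_run in hacc.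
exists (map QL s0, [::]), (rcat ([::],[:: inl (bot A)]) (rcat (flatten (map (@block_word A) bs), map inl (rev c'.1)) ([::],[:: inr c'.2]))).
split => //.
- exact: S0set_ok.
- exists ([::],[:: inl (bot A)]); eexists; split => //.
  eexists; eexists; split; last reflexivity; last reflexivity.
  apply: (PS_complete (n := size bs + size c'.1 + 1)).
    by case: ifP => _; rewrite /= leqnn.
  rewrite /stk; case: ifP => /= h //.
  by apply: ltnW; rewrite ltnNge h.
- by rewrite ew /rcat /flat_word /enc /= cats0.
Qed.
End GL.

Lemma foldl_eqst (T : eqType) (s t : seq T) b :
  foldl (fun b (l : option T * option T) => b && (l.1 == l.2)) b (zipo s t) = b && (s == t).
Proof.
have h0 : forall L : seq (option T * option T), foldl (fun b (l : option T * option T) => b && (l.1 == l.2)) false L = false.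
  by elim=> //.
elim: s t b => [|x s IH] [|y t] b /=.
- by rewrite andbT.
- by rewrite andbF h0.
- by rewrite andbF h0.
- by rewrite IH eqseq_cons -andbA.
Qed.

Lemma part1 (A : VPA) : rational_fun (fun (w : seq (Sigmaf A)) (u : seq (Gm A + Qs A)) =>
                  exists c, tf_rel w c /\ u = enc c).
Proof.
have := @GL A bool (fun q q' => q == q') (fun b l => b && (l.1 == l.2)) id.
rewrite /rational_fun => h; apply: (rat_ext' h) => -[w u] /=; split.
  case=> c [c' [hc]]; rewrite foldl_eqst => /andP [/eqP e2 /eqP e1] ->.
  by exists c; split => //; case: c c' e1 e2 {hc} => a b [a' b'] /= -> ->.
case=> c [hc ->]; exists c, c; split => //.
by rewrite foldl_eqst !eqxx.
Qed.

Section Sem.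
Variable A : VPA.
Notation Q := (Qs A).
Notation G := (Gm A).

Definition dstep (o : option nat) (x : Sigma A) : option nat :=
  match o with
  | None => None
  | Some d => match x with
              | inl (inl _) => Some d.+1
              | inl (inr _) => if d is d'.+1 then Some d' else None
              | inr _ => Some d
              end
  end.
Definition dep (u : seq (Sigma A)) := foldl dstep (Some 0) u.

Lemma dep_None u : foldl dstep None u = None.
Proof. by elim: u. Qed.

Lemma dep_rcons u x : dep (rcons u x) = dstep (dep u) x.
Proof. by rewrite /dep foldl_rcons. Qed.

Lemma delta_rcons (c : conf A) u x : delta c (rcons u x) = step (delta c u) x.
Proof. by rewrite /delta foldl_rcons. Qed.

Lemma delta_cat (c : conf A) u v : delta c (u ++ v) = delta (delta c u) v.
Proof. by rewrite /delta foldl_cat. Qed.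

Lemma N1 u : forall d, dep u = Some d -> forall (b : seq G) p,
  delta (b, p) u = ((delta ([::], p) u).1 ++ b, (delta ([::], p) u).2) /\
  size (delta ([::], p) u).1 = d.
Proof.
elim/last_ind: u => [|u x IH] d.
  by rewrite /dep /= => -[<-] b p.
rewrite dep_rcons; case e: (dep u) => [d0|]; last by [].
move=> hd b p; have [IH1 IH2] := IH d0 e b p.
rewrite !delta_rcons IH1.
move: (delta ([::], p) u) IH2 hd => [L q] /= hL.
case: x => [[a|r]|i] /=.
- by case=> <-; rewrite hL.
- case: L hL => [|g L] /=.
    by move=> <-.
  by move=> <- [<-].
- by case=> <-.
Qed.

Lemma split_exit w : dep w != None \/
  exists u r w', w = u ++ inl (inr r) :: w' /\ dep u = Some 0.
Proof.
elim/last_ind: w => [|w x IH]; first by left.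
case e: (dep (rcons w x)) => [d|]; first by left.
right; move: e; rewrite dep_rcons.
case e: (dep w) => [d0|] /=.
  case: x => [[a|r]|i] //.
  case: d0 e => [|d0] // e _.
  by exists w, r, [::]; rewrite cats1.
case: IH => [|[u [r [w' [-> hu]]]]]; first by rewrite e.
by exists u, r, (rcons w' x); rewrite rcons_cat.
Qed.

Definition topv (b : seq G) := head (bot A) b.

Lemma delta_exit b p u r w' : dep u = Some 0 ->
  delta (b, p) (u ++ inl (inr r) :: w') =
  delta (behead b, dr (delta ([::], p) u).2 r (topv b)) w'.
Proof.
move=> hu; have [h1 h2] := N1 hu b p.
rewrite delta_cat h1 -cat1s delta_cat /=.
move: (delta ([::], p) u) h2 => [L q] /= /size0nil ->.
by case: b {h1}.
Qed.

Lemma lang_nox b p w : dep w != None ->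
  lang (b, p) w = ((delta ([::], p) w).2 \in Fin A).
Proof.
case e: (dep w) => [d|] // _.
by rewrite /lang (N1 e b p).1.
Qed.

Definition Sem (Z : {set Q * Q}) (a1 a2 : seq G) : Prop :=
  forall p, p \in Z -> forall w, lang (a1, p.1) w = lang (a2, p.2) w.

Definition GoodP (Z : {set Q * Q}) : Prop :=
  forall p, p \in Z -> forall w, dep w != None ->
    ((delta ([::], p.1) w).2 \in Fin A) = ((delta ([::], p.2) w).2 \in Fin A).

Definition Next (Z : {set Q * Q}) (g1 g2 : G) : {set Q * Q} :=
  [set x | asb (exists p, p \in Z /\ exists u r, dep u = Some 0 /\
     x = (dr (delta ([::], p.1) u).2 r g1, dr (delta ([::], p.2) u).2 r g2))].

Lemma KL Z a1 a2 : Sem Z a1 a2 <->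
  GoodP Z /\ Sem (Next Z (topv a1) (topv a2)) (behead a1) (behead a2).
Proof.
split.
  move=> h; split.
    move=> p hp w hw; rewrite -(lang_nox a1) // -(lang_nox a2) //; exact: h.
  move=> x; rewrite inE => /asbP [p [hp [u [r [hu ->]]]]] w /=.
  by rewrite /lang -!delta_exit //; apply: h.
case=> hg hn p hp w.
case: (split_exit w) => [hw|[u [r [w' [-> hu]]]]].
  by rewrite !lang_nox //; apply: hg.
rewrite /lang !delta_exit //.
apply: (hn (dr (delta ([::], p.1) u).2 r (topv a1), dr (delta ([::], p.2) u).2 r (topv a2))).
rewrite inE; apply/asbP; exists p; split => //; by exists u, r.
Qed.

Definition SE := (bool * {set Q * Q})%type.
Definition initE (q1 q2 : Q) : SE := (true, [set (q1, q2)]).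
Definition stE (d : SE) (l : option G * option G) : SE :=
  (d.1 && asb (GoodP d.2), Next d.2 (odflt (bot A) l.1) (odflt (bot A) l.2)).
Definition accE (d : SE) : bool := d.1 && asb (Sem d.2 [::] [::]).

Lemma stE_correct n : forall s t (b : bool) Z, size s + size t <= n ->
  (b /\ Sem Z s t) <-> accE (foldl stE (b, Z) (zipo s t)).
Proof.
elim: n => [|n IH] s t b Z hn.
  move: hn; case: s => //; case: t => // _ /=.
  by rewrite /accE /=; split => [[-> /asbP ->] //|/andP [-> /asbP]].
have [[es et]|ne] := classic (s = [::] /\ t = [::]).
  by subst; rewrite /accE /=; split => [[-> /asbP ->] //|/andP [-> /asbP]].
have e : zipo s t = (ohead s, ohead t) :: zipo (behead s) (behead t).
  by rewrite zipo_cons; case: s t ne {hn} => [|? ?] [|? ?] // ne; case: ne.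
have hts : forall u : seq G, odflt (bot A) (ohead u) = topv u by case.
rewrite e /= -[stE (b, Z) _]/(b && asb (GoodP Z), Next Z (odflt (bot A) (ohead s)) (odflt (bot A) (ohead t))).
rewrite -IH; last first.
  by rewrite !size_behead; case: s t ne hn {e} => [|? ?] [|? ?] /=; lia.
rewrite !hts KL; split => [[hb [hg hs]]|[/andP [hb /asbP hg] hs]] //.
by split => //; rewrite hb; apply/asbP.
Qed.

Lemma Eq_sem (q1 q2 : Q) a1 a2 :
  (forall w, lang (a1, q1) w = lang (a2, q2) w) <-> Sem [set (q1, q2)] a1 a2.
Proof.
split; first by move=> h p; rewrite inE => /eqP ->.
by move=> h w; apply: (h (q1, q2)); rewrite inE.
Qed.

Lemma RD w : forall (T b : seq G) q, delta (init_conf A) w = (T ++ b, q) ->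
  exists w1 u p, [/\ delta (init_conf A) w1 = (b, p), dep u != None & delta ([::], p) u = (T, q)].
Proof.
elim/last_ind: w => [|w x IH] T b q.
  case: T => [|??] //; case: b => [|??] // [<-].
  by exists [::], [::], (q0 A).
rewrite delta_rcons; case e: (delta (init_conf A) w) => [s q1].
case: x => [[a|r]|i] /=.
- case: T => [|g T] /=.
    by move=> [<- <-]; exists (rcons w (inl (inl a))), [::], (dc q1 a).2; rewrite delta_rcons e.
  move=> [eg es eq].
  have [w1 [u [p [h1 h2 h3]]]] := IH T b q1 ltac:(by rewrite e es).
  exists w1, (rcons u (inl (inl a))), p; split => //.
    by move: h2; rewrite dep_rcons; case: (dep u).
  by rewrite delta_rcons h3 /= eg eq.
- case: s e => [|g s'] e.
    case: T => [|??] //; case: b => [|??] // [<-].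
    by exists (rcons w (inl (inr r))), [::], (dr q1 r (bot A)); rewrite delta_rcons e.
  move=> [es eq].
  have [w1 [u [p [h1 h2 h3]]]] := IH (g :: T) b q1 ltac:(by rewrite e es).
  exists w1, (rcons u (inl (inr r))), p; split => //.
    move: h2; rewrite dep_rcons; case ed: (dep u) => [d|] //= _.
    have [_ hs] := N1 ed [::] p; move: hs; rewrite h3 /= => <-. by [].
  by rewrite delta_rcons h3 /= eq.
- move=> [es eq].
  have [w1 [u [p [h1 h2 h3]]]] := IH T b q1 ltac:(by rewrite e es).
  exists w1, (rcons u (inr i)), p; split => //.
    by move: h2; rewrite dep_rcons; case: (dep u).
  by rewrite delta_rcons h3 /= eq.
Qed.

Definition ReachStep (p : Q) (g : G) (r : Q) : Prop :=
  exists u, dep u != None /\ delta ([::], p) u = ([:: g], r).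

Lemma reach_cons g b q : rConf (g :: b, q) <-> exists p, ReachStep p g q /\ rConf (b, p).
Proof.
split.
  case=> w hw; have [w1 [u [p [h1 h2 h3]]]] := RD (T := [:: g]) hw.
  by exists p; split; [exists u|exists w1].
case=> p [[u [hu hd]] [w hw]]; exists (w ++ u).
case ed: (dep u) hu => [d|] // _.
by rewrite delta_cat hw (N1 ed b p).1 hd.
Qed.

Fixpoint rchain (a : seq G) (q r : Q) : Prop :=
  match a with [::] => r = q | g :: a' => exists p, ReachStep p g q /\ rchain a' p r end.

Lemma reach_chain a : forall q, rConf (a, q) <-> exists r, rchain a q r /\ rConf ([::], r).
Proof.
elim: a => [|g a IH] q /=.
  by split => [h|[r [-> h]]] //; exists q.
rewrite reach_cons; split.
  case=> p [hs /IH [r [hc hr]]]; exists r; split => //; by exists p.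
case=> r [[p [hs hc]] hr]; exists p; split => //; apply/IH; by exists r.
Qed.
End Sem.
Arguments stE {A}. Arguments accE {A}. Arguments initE {A}. Arguments ReachStep {A}.

Section Rep.
Variable A : VPA.
Variables (rkG : Gm A -> nat) (rkQ : Qs A -> nat).
Notation Q := (Qs A).
Notation G := (Gm A).
Notation rkk := (rk rkG rkQ).

Definition vstep (v : option bool) (a b : nat) := if a == b then v else Some (a < b).
Definition vfold v (a1 a2 : seq G) :=
  foldl (fun v (ab : G * G) => vstep v (rkk (inl ab.1)) (rkk (inl ab.2))) v (zip a1 a2).
Definition vinit (q1 q2 : Q) := vstep None (rkk (inr q1)) (rkk (inr q2)).

Fixpoint lexn (u v : seq nat) (d : option bool) : option bool :=
  match u, v with x :: u', y :: v' => if x == y then lexn u' v' d else Some (x < y) | _, _ => d end.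

Lemma lex_le_lexn u : forall v, size u = size v -> lex_le u v = (lexn u v None != Some false).
Proof.
elim: u => [|x u IH] [|y v] //= [hs].
case: eqP => [<-|ne] /=; first by rewrite ltnn IH.
by rewrite orbF; case: (x < y).
Qed.

Lemma lexn_cat u1 : forall u2 v1 v2 d, size u1 = size v1 ->
  lexn (u1 ++ u2) (v1 ++ v2) d = lexn u1 v1 (lexn u2 v2 d).
Proof.
elim: u1 => [|x u1 IH] u2 [|y v1] v2 d //= [hs].
by rewrite IH.
Qed.

Lemma vfold_lexn a1 : forall a2 v, size a1 = size a2 ->
  vfold v a1 a2 = lexn (map rkk (map inl (rev a1))) (map rkk (map inl (rev a2))) v.
Proof.
elim: a1 => [|x a1 IH] [|y a2] v //= [hs].
rewrite /vfold /= -/(vfold _ a1 a2) IH // !rev_cons -!cats1 !map_cat lexn_cat //.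
by rewrite !size_map !size_rev.
Qed.

Lemma llex_enc (a1 a2 : seq G) q1 q2 :
  ~~ llex_le rkG rkQ (enc (a1, q1)) (enc (a2, q2)) =
  (size a2 < size a1) || ((size a2 == size a1) && (vfold (vinit q1 q2) a1 a2 == Some false)).
Proof.
rewrite /llex_le /enc /= !size_cat !size_map !size_rev /= !addn1 !eqSS !ltnS.
case: (ltngtP (size a1) (size a2)) => h //=.
rewrite lex_le_lexn; last by rewrite /= !size_map !size_cat !size_map !size_rev h.
rewrite /= eqxx !map_cat lexn_cat; last by rewrite !size_map !size_rev h.
by rewrite -vfold_lexn ?h //= ltnn /= negbK.
Qed.

Definition J := (Q * SE A * (option bool * bool))%type.

Definition Mstep (j : J) (o : option G) (g' : G) (j' : J) : Prop :=
  let: (r, de, (v, e)) := j in let: (r', de', (v', e')) := j' in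
  match o with
  | Some g'' => [/\ ~~ e, ~~ e', ReachStep r' g'' r, de' = stE de (Some g'', Some g')
                   & v' = vstep v (rkk (inl g')) (rkk (inl g''))]
  | None => [/\ e', r' = r & de' = stE de (None, Some g')]
  end.

Fixpoint MrelL (j : J) (a : seq G) (j' : J) : Prop :=
  match a with [::] => j' = j | g' :: a' => exists o j1, Mstep j o g' j1 /\ MrelL j1 a' j' end.

Definition SR := ({set Q} * {set J})%type.
Definition stR' (d : SR) (g' : G) : SR :=
  ([set p | asb (exists r, r \in d.1 /\ ReachStep p g' r)],
   [set j' | asb (exists j, j \in d.2 /\ exists o, Mstep j o g' j')]).
Definition stR (d : SR) (l : option G * option G) : SR :=
  if l.2 is Some g' then stR' d g' else d.
Definition initR (q' : Q) : SR :=
  ([set q'], [set j | asb (exists q'', j = (q'', initE q'' q', (vinit q' q'', false)))]).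
Definition FinJ (j : J) : Prop :=
  rConf ([::], j.1.1) /\ accE j.1.2 /\ (j.2.2 \/ j.2.1 = Some false).
Definition accR (d : SR) : bool :=
  asb (exists r, r \in d.1 /\ rConf ([::], r)) && ~~ asb (exists j, j \in d.2 /\ FinJ j).

Lemma foldl_mapX (T1 T2 R : Type) (f : R -> T2 -> R) (h : T1 -> T2) z s :
  foldl f z (map h s) = foldl (fun z x => f z (h x)) z s.
Proof. by elim: s z => //= x s IH z. Qed.

Lemma stR_zipo a1 a2 d : foldl stR d (zipo a1 a2) = foldl stR' d a2.
Proof.
have -> : foldl stR d (zipo a1 a2) =
   foldl (fun d o => if o is Some g then stR' d g else d) d (map snd (zipo a1 a2)).
  by rewrite foldl_mapX.
rewrite map_snd_zipo foldl_cat foldl_mapX.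
have hN : forall k z, foldl (fun d (o : option G) => if o is Some g then stR' d g else d) z (nseq k None) = z by elim.
by rewrite hN.
Qed.

Lemma R_set a : forall d p, p \in (foldl stR' d a).1 <-> exists r, r \in d.1 /\ rchain a r p.
Proof.
elim: a => [|g a IH] d p /=.
  by split => [h|[r [h ->]]] //; exists p.
rewrite IH; split.
  case=> r1 []; rewrite inE => /asbP [r [hr hs]] hc.
  by exists r; split => //; exists r1.
case=> r [hr [r1 [hs hc]]]; exists r1; split => //.
by rewrite inE; apply/asbP; exists r.
Qed.

Lemma B_set a : forall d j', j' \in (foldl stR' d a).2 <-> exists j, j \in d.2 /\ MrelL j a j'.
Proof.
elim: a => [|g a IH] d j' /=.
  by split => [h|[j [h ->]]] //; exists j'.
rewrite IH; split.
  case=> j1 []; rewrite inE => /asbP [j [hj [o hm]]] hc.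
  by exists j; split => //; exists o, j1.
case=> j [hj [o [j1 [hm hc]]]]; exists j1; split => //.
by rewrite inE; apply/asbP; exists j; split => //; exists o.
Qed.

Lemma MREL_true a : forall r de v (j' : J), MrelL (r, de, (v, true)) a j' <->
  [/\ j'.1 = (r, foldl stE de (zipo [::] a)), j'.2.2 = true & (a = [::] -> j'.2.1 = v)].
Proof.
elim: a => [|g a IH] r de v [[r' de'] [v' e']] /=.
  by split => [[-> -> -> ->]|[[-> ->] -> /(_ erefl) ->]].
split.
  case=> [[g''|]] [[[r1 de1] [v1 e1]]] [] /=; first by case.
  case=> -> -> -> /IH /= [[-> ->] -> _]; by split.
case=> [[-> ->] ->] _.
exists None, (r, stE de (None, Some g), (v', true)); split => //.
by apply/IH.
Qed.

Lemma MREL_false a : forall r de v (j' : J), MrelL (r, de, (v, false)) a j' <->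
  exists a'', [/\ size a'' <= size a, rchain a'' r j'.1.1,
     j'.1.2 = foldl stE de (zipo a'' a), j'.2.2 = (size a'' < size a)
   & (size a'' = size a -> j'.2.1 = vfold v a a'')].
Proof.
elim: a => [|g a IH] r de v [[r' de'] [v' e']] /=.
  split => [[-> -> -> ->]|[[|??] [//= _ -> -> -> /(_ erefl) ->]]] //.
  by exists [::].
split.
  case=> [[g''|]] [[[r1 de1] [v1 e1]]] [] /=.
    case=> _ /negbTE e1f hs -> ->; rewrite e1f => /IH [a'' [h1 h2 h3 h4 h5]].
    exists (g'' :: a''); split => //=.
    - by exists r1.
    - by move=> [/h5].
  case=> -> -> -> /MREL_true /= [[-> ->] /= -> _].
  by exists [::]; split.
case=> [[|g'' a'']] /= [h1 h2 h3 h4 h5].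
  exists None, (r, stE de (None, Some g), (v', true)); split => //.
  by apply/MREL_true; rewrite h2 h3 h4.
case: h2 => p [hs hc].
exists (Some g''), (p, stE de (Some g'', Some g), (vstep v (rkk (inl g)) (rkk (inl g'')), false)).
split => //; apply/IH; exists a''; split => //.
by move=> e; apply: h5; rewrite e.
Qed.

Lemma Bad_correct a q' : (exists j, j \in (foldl stR' (initR q') a).2 /\ FinJ j) <->
  exists a'' q'', [/\ rConf (a'', q''), Sem [set (q'', q')] a'' a &
    (size a'' < size a) || ((size a'' == size a) && (vfold (vinit q' q'') a a'' == Some false))].
Proof.
have hE : forall a'' q'', accE (foldl stE (initE q'' q') (zipo a'' a)) <-> Sem [set (q'', q')] a'' a.
  move=> a'' q''; rewrite -(@stE_correct _ (size a'' + size a)) //. split => [[_ h]|h] //.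
split.
  case=> j [/B_set [j0 [hj0 hm]] [hr [ha hev]]].
  move: hj0; rewrite inE => /asbP [q'' ej0]; subst j0.
  case/MREL_false: hm => a'' [h1 h2 h3 h4 h5].
  exists a'', q''; split.
  - by apply/reach_chain; exists j.1.1.
  - by apply/hE; rewrite -h3.
  - case: hev => [|hv]; first by rewrite h4 => ->.
    case: (ltngtP (size a'') (size a)) h1 => // heq _.
    by rewrite /= -h5 // hv.
case=> a'' [q'' [/reach_chain [r [hc hr]] hs hlt]].
have hle : size a'' <= size a.
  by case/orP: hlt => [/ltnW|/andP [/eqP -> _]].
exists (r, foldl stE (initE q'' q') (zipo a'' a), (vfold (vinit q' q'') a a'', size a'' < size a)).
split.
  apply/B_set; exists (q'', initE q'' q', (vinit q' q'', false)); split.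
    by rewrite inE; apply/asbP; exists q''.
  by apply/MREL_false; exists a''; split.
split => //; split; first by apply/hE.
case/orP: hlt => [->|/andP [_ /eqP ->]]; by [left|right].
Qed.

Definition Srep := (SE A * SR)%type.
Definition initD (q q' : Q) : Srep := (initE q q', initR q').
Definition stD (d : Srep) (l : option G * option G) : Srep := (stE d.1 l, stR d.2 l).
Definition accD (d : Srep) : bool := accE d.1 && accR d.2.

Lemma foldl_pairD L : forall d1 d2, foldl stD (d1, d2) L = (foldl stE d1 L, foldl stR d2 L).
Proof. by elim: L => //= l L IH d1 d2; rewrite -IH. Qed.

Theorem D_correct (c c' : conf A) :
  accD (foldl stD (initD c.2 c'.2) (zipo c.1 c'.1)) <-> is_rep rkG rkQ c c'.
Proof.
case: c c' => [a q] [a' q'] /=.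
rewrite /initD foldl_pairD /accD /= stR_zipo.
have hE : accE (foldl stE (initE q q') (zipo a a')) <-> Sem [set (q, q')] a a'.
  rewrite -(@stE_correct _ (size a + size a')) //; split => [[_ h]|h] //.
have hR : asb (exists r, r \in (foldl stR' (initR q') a').1 /\ rConf ([::], r)) <-> rConf (a', q').
  rewrite reach_chain; split.
    move/asbP=> [r [/R_set [r0 [] ]]]; rewrite inE => /eqP -> hc hr.
    by exists r.
  move=> [r [hc hr]]; apply/asbP; exists r; split => //.
  by apply/R_set; exists q'; rewrite inE eqxx.
split.
  case/andP => /hE hs /andP [/hR hr hb].
  have hs' : forall w, lang (a', q') w = lang (a, q) w.
    by move=> w; symmetry; exact: (proj2 (Eq_sem q q' a a') hs w).
  split => // [[a'' q'']] hr'' he''.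
  apply/negPn/negP; rewrite llex_enc => hlt.
  move/negP: hb; apply; apply/asbP; apply/Bad_correct.
  exists a'', q''; split => //.
  by apply/Eq_sem => w; rewrite he'' hs'.
case=> hr hs hmin.
apply/andP; split; first by apply/hE/Eq_sem => w; rewrite hs.
apply/andP; split; first by apply/hR.
apply/negP => /asbP /Bad_correct [a'' [q'' [hr'' hs'' hlt]]].
move: hlt; rewrite -llex_enc => /negP; apply; apply: (hmin (a'', q'') hr'').
move=> w; rewrite -hs; exact: (proj2 (Eq_sem q'' q' a'' a') hs'' w).
Qed.
End Rep.

Theorem lemma8 (A : VPA) (rkG : Gm A -> nat) (rkQ : Qs A -> nat)
  (rkG_inj : injective rkG) (rkQ_inj : injective rkQ) :
  rational_fun (fun (w : seq (Sigmaf A)) (u : seq (Gm A + Qs A)) =>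
                  exists c, tf_rel w c /\ u = enc c)
  /\
  rational_fun (fun (w : seq (Sigmaf A)) (u : seq (Gm A + Qs A)) =>
                  exists c', nuf_rel rkG rkQ w c' /\ u = enc c').
Proof.
split; first exact: part1.
have := @GL A (Srep A) (initD rkG rkQ) (stD rkG rkQ) (@accD A).
rewrite /rational_fun => h; apply: (rat_ext' h) => -[w u] /=; split.
  case=> c [c' [hc /D_correct hr ->]].
  by exists c'; split => //; exists c.
case=> c' [[c [hc hr]] ->]; exists c, c'; split => //.
exact/D_correct.
Qed.
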